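(* Let $\mathbf{a}$ be a CSCA and $\xi\in\mathcal{P}^2$ a non-zero vector with $\mathbf{a}\xi=\xi$. Then $\mathbf{a}$ is periodic with period two, i.e. $\mathbf{a}^2=\mathbb{1}$ (equivalently $\mathrm{tr}\,\mathbf{a}=0$).
   Context: $\mathcal{P}$ is the ring of Laurent polynomials in $u$ over $\mathbb{Z}_2$, $\mathcal{R}$ its subring of palindromes ($p(u^{-1})=p(u)$). A CSCA is a $2\times2$ matrix with entries in $\mathcal{R}$ and determinant $1$, acting on $\mathcal{P}^2$. *)

(* Defs.v *)
(* The ring P = Z_2[u, u^-1] of Laurent polynomials is realised inside the
   field K = Z_2(u) of rational functions ({fraction {poly 'F_2}}) as the
   elements of the form p(u) / u^n, with p a polynomial and n a natural. *)
From HB Require Import structures.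
From mathcomp Require Import all_boot all_order all_algebra fraction.
Set Implicit Arguments. Unset Strict Implicit. Unset Printing Implicit Defensive.
Import Order.TTheory GRing.Theory.
Local Open Scope ring_scope.

Notation tofrac := (@FracField.tofrac {poly 'F_2}).
Definition K := {fraction {poly 'F_2}}.

Definition uK : K := (tofrac ('X : {poly 'F_2})).

Definition polyK (p : {poly 'F_2}) : K := (tofrac p).

Definition evalK (p : {poly 'F_2}) (t : K) : K :=
  (map_poly (fun c : 'F_2 => tofrac (c%:P : {poly 'F_2})) p).[t].

Definition laurent (x : K) : Prop :=
  exists (p : {poly 'F_2}) (n : nat), x = polyK p / uK ^+ n.

(* x is a palindrome (x in R): x(u^{-1}) = x(u); for x = p(u)/u^n we have
   x(u^{-1}) = p(u^{-1}) / (u^{-1})^n. *)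
Definition palindromic (x : K) : Prop :=
  exists (p : {poly 'F_2}) (n : nat),
    x = polyK p / uK ^+ n /\ evalK p uK^-1 / uK^-1 ^+ n = x.

Definition CSCA (a : 'M[K]_2) : Prop :=
  (forall i j, palindromic (a i j)) /\ \det a = 1.

Definition laurent_vec (xi : 'cV[K]_2) : Prop := forall i, laurent (xi i 0).

(* Main.v *)
Require Import Defs.
From HB Require Import structures.
From mathcomp Require Import all_boot all_order all_algebra fraction ring.
Local Open Scope ring_scope.
Import GRing.Theory.
Lemma det22 (R : comNzRingType) (A : 'M[R]_2) : \det A = A 0 0 * A 1 1 - A 0 1 * A 1 0.
Proof.
rewrite (expand_det_row _ 0) !big_ord_recr /= big_ord0 /cofactor.
rewrite !(expand_det_row _ 0) !big_ord1 /cofactor !det_mx00 !mxE /=.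
have -> : widen_ord (m:=2) (leqnSn 1) ord_max = 0 by apply: val_inj.
have -> : lift 0 (0 : 'I_1) = 1 :> 'I_2 by apply: val_inj.
have -> : (ord_max : 'I_2) = 1 by apply: val_inj.
have -> : lift (1:'I_2) (0 : 'I_1) = 0 :> 'I_2 by apply: val_inj.

rewrite /= expr0 expr1; ring.
Qed.
Lemma two : (2%:R : K) = 0.
Proof. have -> : (2%:R : K) = tofrac (2%:R : {poly 'F_2}) by rewrite rmorph_nat.
rewrite -polyC_natr (_ : (2%:R : 'F_2) = 0); last by apply: val_inj.
by rewrite rmorph0. Qed.
Lemma mat2P (R : Type) (A B : 'M[R]_2) :
  A 0 0 = B 0 0 -> A 0 1 = B 0 1 -> A 1 0 = B 1 0 -> A 1 1 = B 1 1 -> A = B.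
Proof.
move=> h1 h2 h3 h4; apply/matrixP => i j.
have E0 : forall (H : (0 < 2)%N), Ordinal H = 0 by move=> H; apply: val_inj.
have E1 : forall (H : (1 < 2)%N), Ordinal H = 1 by move=> H; apply: val_inj.
case: i => [[|[|i]] Hi] //; case: j => [[|[|j]] Hj] //;
by rewrite ?E0 ?E1.
Qed.

Theorem mainTheorem6 (a : 'M[K]_2) (xi : 'cV[K]_2) :
  CSCA a -> laurent_vec xi -> xi != 0 -> a *m xi = xi ->
  a *m a = 1%:M /\ \tr a = 0.
Proof.
move=> [_ hdet] _ hxi hfix.
rewrite det22 in hdet.
have e0 := congr1 (fun M : 'M[K]_(2,1) => M 0 0) hfix.
have e1 := congr1 (fun M : 'M[K]_(2,1) => M 1 0) hfix.
move: e0 e1; rewrite /= !mxE !big_ord_recr /= !big_ord0 !add0r.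
have -> : widen_ord (m:=2) (leqnSn 1) ord_max = 0 by apply: val_inj.
have -> : (ord_max : 'I_2) = 1 by apply: val_inj.
move=> e0 e1.
set p := a 0 0 in hdet e0 e1 *; set q := a 0 1 in hdet e0 e1 *.
set r := a 1 0 in hdet e0 e1 *; set s := a 1 1 in hdet e0 e1 *.
set x := xi 0 0 in e0 e1; set y := xi 1 0 in e0 e1.
have h2 := two.
have h2' : (1 + 1 : K) = 0 by rewrite -h2 mulr2n.
have hD : (p - 1) * (s - 1) - q * r = 0.
  have hx : ((p - 1) * (s - 1) - q * r) * x = 0.
    have -> : ((p - 1) * (s - 1) - q * r) * x =
      (s - 1) * (p * x + q * y - x) - q * (r * x + s * y - y) by ring.
    by rewrite e0 e1 !subrr !mulr0 subrr.
  have hy : ((p - 1) * (s - 1) - q * r) * y = 0.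
    have -> : ((p - 1) * (s - 1) - q * r) * y =
      (p - 1) * (r * x + s * y - y) - r * (p * x + q * y - x) by ring.
    by rewrite e0 e1 !subrr !mulr0 subrr.
  apply/eqP; apply: contraR hxi => hD.
  move/eqP: hx; rewrite mulf_eq0 (negbTE hD) /= => /eqP hx.
  move/eqP: hy; rewrite mulf_eq0 (negbTE hD) /= => /eqP hy.
  apply/eqP; apply/matrixP => i j; rewrite (ord1 j) mxE.
  case: i => [[|[|i]] Hi] //.
  - by rewrite (_ : Ordinal Hi = 0) //; apply: val_inj.
  - by rewrite (_ : Ordinal Hi = 1) //; apply: val_inj.
have htr : p + s = 0.
  have -> : p + s = (p * s - q * r) + 1 - ((p - 1) * (s - 1) - q * r) by ring.
  by rewrite hD hdet subr0 h2'.
have hs : s = - p by apply: (addrI p); rewrite htr subrr.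
have hm1 : (-1 : K) = 1 by apply: (addrI 1); rewrite subrr h2'.
split; last first.
  rewrite /mxtrace !big_ord_recr /= !big_ord0 add0r.
  have -> : widen_ord (m:=2) (leqnSn 1) ord_max = 0 by apply: val_inj.
  by have -> : (ord_max : 'I_2) = 1 by apply: val_inj.
have W : forall i j : 'I_2, (a *m a) i j = a i 0 * a 0 j + a i 1 * a 1 j.
  move=> i j; rewrite mxE !big_ord_recr /= !big_ord0 add0r.
  have -> : widen_ord (m:=2) (leqnSn 1) ord_max = 0 by apply: val_inj.
  by have -> : (ord_max : 'I_2) = 1 by apply: val_inj.
apply: mat2P; rewrite W !mxE /= -/p -/q -/r -/s.
- by rewrite -hm1 -hdet hs; ring.
- by rewrite hs; ring.
- by rewrite hs; ring.
- by rewrite -hm1 -hdet hs; ring.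
Qed.
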